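(* Let $f:\mathbb{X}\to\mathbb{R}$ be a finite measurable function and suppose there are $M<\infty$ and a set of positive measure on which $\frac1n|f\circ T^{-n}+f\circ T^n|<M$ for all sufficiently large $n$. Then $\limsup_n \frac1n|f\circ T^{2n}|\le 24M$ $\mu$-a.e. on $\mathbb{X}$.
   Context: Standing assumptions: $(\mathbb{X},\mathcal{X},\mu,T)$ is a probability space with $T$ an invertible, bi-measurable, measure-preserving, ergodic transformation. *)

(* Defs.v *)
From HB Require Import structures.
From mathcomp Require Import all_boot all_order all_algebra.
From mathcomp Require Import all_classical all_reals all_analysis.
Set Implicit Arguments. Unset Strict Implicit. Unset Printing Implicit Defensive.
Import Order.TTheory GRing.Theory Num.Theory.
Local Open Scope classical_set_scope.
Local Open Scope ring_scope.

Definition invertible_mpt_ergodic (d : measure_display) (X : measurableType d)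
  (R : realType) (mu : probability X R) (T Tinv : X -> X) : Prop :=
  cancel T Tinv /\ cancel Tinv T /\
  measurable_fun setT T /\ measurable_fun setT Tinv /\
  (forall A, measurable A -> mu (T @^-1` A) = mu A) /\
  (forall A, measurable A -> T @^-1` A = A -> mu A = 0%E \/ mu A = 1%E).

(* Main.v *)
Require Import Defs.
Set Warnings "-all".
From HB Require Import structures.
From mathcomp Require Import all_boot all_order all_algebra.
From mathcomp Require Import all_classical all_reals all_analysis.
From mathcomp Require Import measurable_realfun zify lra.
Import Order.TTheory GRing.Theory Num.Theory.
Local Open Scope classical_set_scope.
Local Open Scope ring_scope.

Lemma iter_cancel (Y : Type) (f g : Y -> Y) : cancel f g ->
  forall n, cancel (iter n f) (iter n g).
Proof.
move=> fK; elim=> [//|n IH] x.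
by rewrite [iter n.+1 f x]iterS iterSr fK IH.
Qed.

Lemma iter_sub (Y : Type) (f g : Y -> Y) : cancel f g ->
  forall m k x, (m <= k)%N -> iter m g (iter k f x) = iter (k - m) f x.
Proof.
move=> fK m k x mk; rewrite -{1}(subnKC mk) iterD.
by rewrite iter_cancel.
Qed.

Section MT.
Context d (X : measurableType d) (R : realType) (mu : probability X R).

Lemma measurable_iter (g : X -> X) : measurable_fun setT g ->
  forall n, measurable_fun setT (iter n g).
Proof.
move=> mg; elim=> [|n IH]; first exact: measurable_id.
have -> : iter n.+1 g = g \o iter n g by apply/funext => x; rewrite iterS.
exact: measurableT_comp.
Qed.

Lemma mpre (g : X -> X) : measurable_fun setT g ->
  forall S, measurable S -> measurable (g @^-1` S).
Proof. by move=> mg S mS; have := mg measurableT S mS; rewrite setTI. Qed.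

Lemma pres_iter (g : X -> X) : measurable_fun setT g ->
  (forall S, measurable S -> mu (g @^-1` S) = mu S) ->
  forall n S, measurable S -> mu (iter n g @^-1` S) = mu S.
Proof.
move=> mg pg; elim=> [//|n IH] S mS.
have -> : iter n.+1 g @^-1` S = iter n g @^-1` (g @^-1` S).
  by apply/seteqP; split => x /=; rewrite ?iterS.
by rewrite IH ?pg //; exact: mpre.
Qed.

Lemma pres_inv (T Tinv : X -> X) : cancel T Tinv -> measurable_fun setT Tinv ->
  (forall S, measurable S -> mu (T @^-1` S) = mu S) ->
  forall S, measurable S -> mu (Tinv @^-1` S) = mu S.
Proof.
move=> TK mTi pT S mS.
have E : T @^-1` (Tinv @^-1` S) = S by apply/seteqP; split => x /=; rewrite TK.
by rewrite -{2}E pT //; exact: mpre.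
Qed.


Section Gap.
Context (T Tinv : X -> X) (TK : cancel T Tinv) (TiK : cancel Tinv T)
  (mT : measurable_fun setT T) (mTi : measurable_fun setT Tinv)
  (pT : forall S, measurable S -> mu (T @^-1` S) = mu S)
  (B : set X) (mB : measurable B).

Definition Bg k := B `\` \bigcup_(i in [set i | (0 < i <= k)%N]) (iter i T @^-1` B).

Lemma mBg k : measurable (Bg k).
Proof.
apply: measurableD => //; apply: bigcup_measurable => i _.
exact/mpre/mB/measurable_iter.
Qed.

Definition W k := iter k Tinv @^-1` Bg k.

Lemma W_triv : trivIset setT W.
Proof.
have key k l z : (k < l)%N -> W k z -> W l z -> False.
  move=> kl [Bk _] [_ /= hl]; apply: hl.
  exists (l - k)%N; first by rewrite /=; lia.
  rewrite /=.
  have -> : iter l Tinv z = iter (l - k) Tinv (iter k Tinv z).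
    by rewrite -iterD subnK // ltnW.
  by rewrite iter_cancel.
move=> k l _ _ [z [Wk Wl]].
by case: (ltngtP k l) => // [kl|lk]; [case: (key k l z kl Wk Wl)|case: (key l k z lk Wl Wk)].
Qed.

Lemma sumBg p : (\sum_(0 <= k < p) mu (Bg k) <= 1)%E.
Proof.
have pTi := pres_inv T Tinv TK mTi pT.
have -> : \sum_(0 <= k < p) mu (Bg k) = \sum_(0 <= k < p | k \in setT) mu (W k).
  rewrite [RHS]big_mkcond /=; apply: eq_bigr => k _.
  by rewrite in_setT /W (pres_iter Tinv mTi pTi) //; exact: mBg.
apply: le_trans (nneseries_lim_ge _ _) _ => //.
rewrite -measure_bigcup //; last exact: W_triv.
  by apply: probability_le1; apply: bigcup_measurable => k _; apply/mpre/mBg/measurable_iter.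
by move=> k _; apply/mpre/mBg/measurable_iter.
Qed.


Definition E (n : nat) := iter n T @^-1` Bg (n %/ 4)%N.

Lemma mE n : measurable (E n).
Proof. exact/mpre/mBg/measurable_iter. Qed.

Lemma part4 (b : nat -> \bar R) p :
  \sum_(0 <= n < 4 * p) b (n %/ 4)%N = \sum_(0 <= k < p) (b k + b k + b k + b k).
Proof.
elim: p => [|p IH]; first by rewrite muln0 !big_geq.
rewrite (_ : (4 * p.+1 = (4 * p).+3.+1)%N); last by lia.
rewrite !big_nat_recr //=.
rewrite IH.
have h0 : ((4 * p) %/ 4 = p)%N by lia.
have h1 : ((4 * p).+1 %/ 4 = p)%N by lia.
have h2 : ((4 * p).+2 %/ 4 = p)%N by lia.
have h3 : ((4 * p).+3 %/ 4 = p)%N by lia.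
by rewrite h0 h1 h2 h3 !addeA.
Qed.

Lemma sumE : (\sum_(n <oo) mu (E n) < +oo)%E.
Proof.
apply: (@le_lt_trans _ _ 4%:E); last exact: ltry.
apply: lime_le; first by apply: is_cvg_nneseries => n _ _.
apply: nearW => q.
have pT' n : mu (E n) = mu (Bg (n %/ 4)%N) by rewrite /E (pres_iter T mT pT) //; exact: mBg.
under eq_bigr do rewrite pT'.
apply: (@le_trans _ _ (\sum_(0 <= n < (4 * q)%N) mu (Bg (n %/ 4)%N))).
  by apply: lee_sum_nneg_natr => //; lia.
rewrite (part4 (fun k => mu (Bg k)) q) !big_split /=.
have := sumBg q.
move=> h.
rewrite (_ : 4%:E = 1 + 1 + 1 + 1)%E; last by rewrite !EFinD; congr (_%:E); lra.
by rewrite !leeD.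
Qed.

End Gap.

Lemma I_full (T : X -> X) (mT : measurable_fun setT T)
  (pT : forall S, measurable S -> mu (T @^-1` S) = mu S)
  (erg : forall A, measurable A -> T @^-1` A = A -> mu A = 0%E \/ mu A = 1%E)
  (B : set X) (mB : measurable B) (Bpos : (0 < mu B)%E) :
  mu (~` lim_sup_set (fun k => iter k T @^-1` B)) = 0%E.
Proof.
set F := fun k => iter k T @^-1` B.
have mF k : measurable (F k) by exact/mpre/mB/measurable_iter.
have mI : measurable (lim_sup_set F).
  by apply: bigcapT_measurable => n; apply: bigcup_measurable => j _; exact: mF.
have inv : T @^-1` lim_sup_set F = lim_sup_set F.
  apply/seteqP; split => x /= h n _.
    have [j /= nj Fj] := h n Logic.I.
    exists j.+1; first by rewrite /=; lia.
    by move: Fj; rewrite /F /= -iterSr => h'; exact: h'.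
  have [j /= nj Fj] := h n.+1 Logic.I.
  exists j.-1; first by rewrite /=; lia.
  by move: Fj; rewrite /F /= -iterSr prednK //; lia.
have fin : (mu (\bigcup_(k in [set k | (0 <= k)%N]) F k) < +oo)%E.
  apply: (le_lt_trans (probability_le1 _ _)) => //; last exact: ltry.
  by apply: bigcup_measurable => j _; exact: mF.
have cv := lim_sup_set_cvg mu F mF fin.
have ge : (mu B <= mu (lim_sup_set F))%E.
  rewrite -(cvg_lim _ cv) //.
  apply: lime_ge; first by apply/cvg_ex; eexists; exact: cv.
  apply: nearW => n.
  rewrite -(pres_iter T mT pT n B mB).
  apply: le_measure; rewrite ?inE.
  - exact: (mF n).
  - by apply: bigcup_measurable => j _; exact: mF.
  - by move=> x Fx; exists n => //=.
rewrite probability_setC //.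
have [I0|->] := erg _ mI inv; last by rewrite subee.
by move: Bpos; rewrite I0 in ge; rewrite lt_neqAle eq_le ge measure_ge0.
Qed.

End MT.
Arguments measurable_iter {d X} g.
Arguments mpre {d X} g.
Arguments I_full {d X R mu T}.
Arguments mE {d X T}.
Arguments sumE {d X R mu T Tinv}.
Arguments E {d X}.
Lemma cover_lemma (V : nat -> Prop) (p v0 : nat) :
  V v0 -> (p <= v0)%N ->
  (forall n, (p <= n)%N -> V n -> exists i, (0 < i)%N /\ (i <= n %/ 4)%N /\ V (n + i)) ->
  forall s, exists k, [/\ V k, (p <= k)%N, (k <= v0 + s)%N & (v0 + s <= k + k %/ 4)%N].
Proof.
move=> Vv0 pv0 gap; elim=> [|s [k [Vk pk kt tk]]].
  by exists v0; split => //; rewrite addn0 // leq_addr.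
have [h|h] := leqP (v0 + s.+1) (k + k %/ 4).
  by exists k; split => //; lia.
have [i [i0 [ik Vki]]] := gap k pk Vk.
exists (k + i); split => //; first lia.
  lia.
have := leq_div2r 4 (leq_addr i k); rewrite addnC => hd.
lia.
Qed.

Lemma det_bound (R : realType) (a : nat -> R) (V : nat -> Prop) (M : R) (N p : nat) :
  0 <= M ->
  (forall q, exists k, (q <= k)%N /\ V k) ->
  (forall n, (p <= n)%N -> V n -> exists i, (0 < i)%N /\ (i <= n %/ 4)%N /\ V (n + i)) ->
  (forall k m, V k -> (N <= m)%N -> (0 < m)%N -> (m <= k)%N ->
     `|a (k + m)%N + a (k - m)%N| < m%:R * M) ->
  exists C, forall m, `|a m| <= M * m%:R + C.
Proof.
move=> M0 inf gap sym.
have [v0 [pv0 Vv0]] := inf p.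
have cov := @cover_lemma V p v0 Vv0 pv0 gap.
pose L := (3 * v0 + 3 * N + 60)%N.
exists (\sum_(i < L) `|a i|).
have C0 : 0 <= \sum_(i < L) `|a i| by apply: sumr_ge0.
elim/ltn_ind => m IH.
have [mL|Lm] := ltnP m L.
  rewrite (bigD1 (Ordinal mL)) //=.
  have h1 : 0 <= \sum_(i < L | i != Ordinal mL) `|a i| by apply: sumr_ge0.
  have h2 : 0 <= M * m%:R by apply: mulr_ge0.
  lra.
have [k [Vk pk kt tk]] := cov (2 * (m %/ 3) - v0)%N.
have h3 : (3 * (m %/ 3) <= m < 3 * (m %/ 3) + 3)%N.
  by lia.
have h4 : (4 * (k %/ 4) <= k)%N by lia.
have e1 : (k + (m - k))%N = m by lia.
have e2 : ((m - k) + (k - (m - k)))%N = k by lia.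
have hs := sym k (m - k)%N Vk ltac:(lia) ltac:(lia) ltac:(lia).
rewrite e1 in hs.
have hj := IH (k - (m - k))%N ltac:(lia).
have : `|a m| <= `|a m + a (k - (m - k))%N| + `|a (k - (m - k))%N|.
  by rewrite -[X in `|X| <= _](addrK (a (k - (m - k))%N)) ler_normB.
move=> h; apply: (le_trans h).
apply: le_trans (lerD (ltW hs) hj) _.
rewrite addrA mulrC -mulrDr -natrD e2 lerD2r.
by apply: ler_wpM2l => //; rewrite ler_nat; lia.
Qed.

Theorem mainTheorem10 (d : measure_display) (X : measurableType d)
  (R : realType) (mu : probability X R) (T Tinv : X -> X)
  (hT : invertible_mpt_ergodic mu T Tinv)
  (f : X -> R) (hf : measurable_fun setT f) (M : R) (A : set X)
  (hA : measurable A) (hApos : (0 < mu A)%E)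
  (hbound : forall x, A x -> exists N : nat, forall n : nat, (N <= n)%N ->
     (n%:R)^-1 * `|f (iter n Tinv x) + f (iter n T x)| < M) :
  {ae mu, forall x,
     (limn_esup (fun n : nat => ((n%:R)^-1 * `|f (iter (2 * n) T x)|)%:E)
        <= (24 * M)%:E)%E}.
Proof.
have [TK [TiK [mT [mTi [pT erg]]]]] := hT.
have [x0 Ax0] : A !=set0.
  by apply/set0P/negP => /eqP A0; rewrite A0 measure0 ltxx in hApos.
have M0 : 0 < M.
  have [N0 hN0] := hbound x0 Ax0.
  apply: le_lt_trans (hN0 N0 (leqnn _)).
  by apply: mulr_ge0 => //; rewrite invr_ge0.
pose g := fun (n : nat) x => (n%:R)^-1 * `|f (iter n Tinv x) + f (iter n T x)|.
have mg n : measurable_fun setT (g n).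
  apply: measurable_funM; first exact: measurable_cst.
  apply: measurableT_comp; first exact: normr_measurable.
  by apply: measurable_funD; apply: measurableT_comp => //; exact: measurable_iter.
pose BN N := A `\` \bigcup_(n in [set n | (N <= n)%N]) [set x | M <= g n x].
have mBN N : measurable (BN N).
  apply: measurableD => //; apply: bigcup_measurable => n _.
  have -> : [set x | M <= g n x] = g n @^-1` `[M, +oo[.
    by apply/seteqP; split => x /=; rewrite in_itv /= andbT.
  by have := mg n measurableT _ (measurable_itv `[M, +oo[); rewrite setTI.
have [N BNpos] : exists N, (0 < mu (BN N))%E.
  apply: contrapT => /forallNP h.
  have h0 N : mu.-negligible (BN N).
    exists (BN N); split => //.
    apply/eqP; rewrite eq_le measure_ge0 andbT leNgt; apply/negP => hp.
    exact: (h N).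
  have sub : A `<=` \bigcup_N BN N.
    move=> x Ax; have [N hN] := hbound x Ax; exists N => //; split => //.
    by move=> [n /= Nn]; rewrite leNgt hN.
  have := negligibleS sub (negligible_bigcup h0).
  by move=> /(measure_negligible hA) A0; rewrite A0 ltxx in hApos.
pose B := BN N.
have mB : measurable B := mBN N.
have Inull := I_full mT pT erg _ mB BNpos.
have Enull := lim_sup_set_cvg0 (mE mT _ mB) (sumE TK TiK mT mTi pT _ mB).
set F := fun k => iter k T @^-1` B.
have mI : measurable (lim_sup_set F).
  apply: bigcapT_measurable => n; apply: bigcup_measurable => j _.
  exact/mpre/mB/measurable_iter.
have mLE : measurable (lim_sup_set (E T B)).
  apply: bigcapT_measurable => n; apply: bigcup_measurable => j _.
  exact: mE.
have negI : mu.-negligible (~` lim_sup_set F) by exists (~` lim_sup_set F); split; [exact: measurableC|exact: Inull|].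
have negE : mu.-negligible (lim_sup_set (E T B)) by exists (lim_sup_set (E T B)); split.
apply: (negligibleS _ (negligibleU negI negE)).
move=> x /= nP.
have [Ix|nIx] := pselect (lim_sup_set F x); last by left.
have [Ex|nEx] := pselect (lim_sup_set (E T B) x); first by right.
exfalso; apply: nP.
have [n0 hn0] : exists n0, forall j, (n0 <= j)%N -> ~ E T B j x.
  apply: contrapT => h; apply: nEx => n _; apply: contrapT => h2; apply: h.
  by exists n => j nj Ej; apply: h2; exists j.
have hinf : forall q, exists k, (q <= k)%N /\ B (iter k T x).
  move=> q; have [j /= qj Fj] := Ix q Logic.I.
  by exists j.
have hgap : forall n, (n0 <= n)%N -> B (iter n T x) ->
    exists i, (0 < i)%N /\ (i <= n %/ 4)%N /\ B (iter (n + i) T x).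
  move=> n nn Bn.
  have nE := hn0 n nn.
  have : (\bigcup_(i in [set i | (0 < i <= n %/ 4)%N]) (iter i T @^-1` B)) (iter n T x).
    apply: contrapT => h; apply: nE; rewrite /E /Bg /=; split => //.
  move=> [i /= /andP[i0 iN] Bi]; exists i; split => //; split => //.
  by rewrite addnC iterD.
have hsym : forall k m, B (iter k T x) -> (N <= m)%N -> (0 < m)%N -> (m <= k)%N ->
    `|f (iter (k + m)%N T x) + f (iter (k - m)%N T x)| < m%:R * M.
  move=> k m [_ Bk] Nm m0 mk.
  have h1 : ~ (M <= g m (iter k T x)) by move=> h; apply: Bk; exists m.
  move/negP: h1; rewrite /g -ltNge ltr_pdivrMl ?ltr0n // iter_sub // -iterD addnC.
  by rewrite addrC.
have [C hC] := @det_bound R (fun i => f (iter i T x)) (fun k => B (iter k T x)) M N n0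
  (ltW M0) hinf hgap hsym.
pose n1 := Num.Def.archi_bound (`|C| / (22 * M)).
have hn1 : `|C| / (22 * M) < n1%:R by apply: archi_boundP; apply: divr_ge0 => //; lra.
have h1 : `|C| < n1%:R * (22 * M) by rewrite -ltr_pdivrMr //; lra.
have H : forall k, (n1 < k)%N ->
    k%:R^-1 * `|f (iter (2 * k)%N T x)| <= 24 * M.
  move=> k hk.
  have k0 : (0 : R) < k%:R by rewrite ltr0n; lia.
  rewrite ler_pdivrMl //.
  have h2 : n1%:R <= k%:R :> R by rewrite ler_nat; lia.
  have := hC (2 * k)%N; rewrite natrM => h.
  apply: le_trans h _.
  have hC' : C <= `|C| by apply: ler_norm.
  nra.
rewrite limn_esup_lim; apply: lime_le; first exact: is_cvg_esups.
exists n1.+1 => // n /= hn.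
apply: ge_ereal_sup => _ [k /= nk <-].
rewrite lee_fin; apply: H; lia.
Qed.
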